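(* Suppose the equation of state is asymptotically polytropic with $n_0=3$. Then no orbit of the system lying in the interior of the cube $(0,1)^3$ converges as $\lambda\to+\infty$ to the fixed point $P_1=(U,Q,\Omega)=(0,1/2,0)$. Consequently every orbit from the interior of the cube has $P_2=(0,1,0)$ as its $\omega$-limit.
   Context: Equation of state: $\rho=\rho(p)$ with $\rho>0$ for $p>0$, $\eta(p)=\int_0^p dp'/\rho(p')$ finite; index function $n(\eta)=\frac{\eta}{\rho}\frac{d\rho}{d\eta}$; asymptotically polytropic: $n$ is $C^1$ on $(0,\infty)$, bounded and non-negative, $n(\eta)-n_0=O(\eta^{a_0})$ as $\eta\to0$, $n(\eta)-n_1=O(\eta^{-a_1})$ as $\eta\to\infty$, $a_0,a_1>0$. The system on $[0,1]^3$ is $\frac{dU}{d\lambda}=U(1-U)[(1-Q)(3-4U)-n(\Omega)Q(1-U)]$, $\frac{dQ}{d\lambda}=Q(1-Q)[(2U-1)(1-Q)+Q(1-U)]$, $\frac{d\Omega}{d\lambda}=-a\Omega(1-\Omega)Q(1-U)$, with $0<a<\min(a_0,a_1)$ and $n(\Omega)=n(\eta)$ at $\eta=(\Omega/(1-\Omega))^{1/a}$, $n(0)=n_0$, $n(1)=n_1$. At $P_1$, for $n_0=3$, the linearization has a one-dimensional center subspace. *)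

(* Defs.v *)
From Stdlib Require Import Reals.
From Coquelicot Require Import Coquelicot.
Open Scope R_scope.

Definition asymptotically_polytropic (n : R -> R) (n0 n1 a0 a1 : R) : Prop :=
  0 < a0 /\ 0 < a1 /\
  (forall eta, 0 < eta -> ex_derive n eta) /\
  (forall eta, 0 < eta -> continuous (Derive n) eta) /\
  (exists M, forall eta, 0 < eta -> Rabs (n eta) <= M) /\
  (forall eta, 0 < eta -> 0 <= n eta) /\
  (exists C delta, 0 < delta /\
     forall eta, 0 < eta < delta -> Rabs (n eta - n0) <= C * Rpower eta a0) /\
  (exists C K, forall eta, K < eta -> Rabs (n eta - n1) <= C * Rpower eta (- a1)).

Definition nOmega (n : R -> R) (n0 n1 a : R) (W : R) : R :=
  if Rle_dec W 0 then n0
  else if Rle_dec 1 W then n1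
  else n (Rpower (W / (1 - W)) (1 / a)).

Definition fU (nO : R -> R) (U Q W : R) : R :=
  U * (1 - U) * ((1 - Q) * (3 - 4 * U) - nO W * Q * (1 - U)).
Definition fQ (U Q W : R) : R :=
  Q * (1 - Q) * ((2 * U - 1) * (1 - Q) + Q * (1 - U)).
Definition fW (a U Q W : R) : R :=
  - a * W * (1 - W) * Q * (1 - U).

Definition interior_orbit (nO : R -> R) (a : R) (U Q W : R -> R) : Prop :=
  forall t, 0 < t ->
    (0 < U t < 1 /\ 0 < Q t < 1 /\ 0 < W t < 1) /\
    is_derive U t (fU nO (U t) (Q t) (W t)) /\
    is_derive Q t (fQ (U t) (Q t) (W t)) /\
    is_derive W t (fW a (U t) (Q t) (W t)).

Definition converges_to (U Q W : R -> R) (p : R * R * R) : Prop :=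
  is_lim U p_infty (fst (fst p)) /\ is_lim Q p_infty (snd (fst p)) /\
  is_lim W p_infty (snd p).

Definition omega_limit (U Q W : R -> R) (p : R * R * R) : Prop :=
  exists tk : nat -> R, is_lim_seq tk p_infty /\
    is_lim_seq (fun k => U (tk k)) (fst (fst p)) /\
    is_lim_seq (fun k => Q (tk k)) (snd (fst p)) /\
    is_lim_seq (fun k => W (tk k)) (snd p).

(* Main.v *)
Require Import Defs.
From Stdlib Require Import Reals Lra Psatz Classical.
From Coquelicot Require Import Coquelicot.
Open Scope R_scope.


Lemma D_plus f g x df dg : is_derive f x df -> is_derive g x dg ->
  is_derive (fun t => f t + g t) x (df + dg).
Proof. intros H H0; exact (is_derive_plus f g x df dg H H0). Qed.
Lemma D_minus f g x df dg : is_derive f x df -> is_derive g x dg ->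
  is_derive (fun t => f t - g t) x (df - dg).
Proof. intros H H0; exact (is_derive_minus f g x df dg H H0). Qed.
Lemma D_scal f x k df : is_derive f x df -> is_derive (fun t => k * f t) x (k * df).
Proof. intros H; exact (is_derive_scal f x k df H). Qed.
Lemma D_const x (c : R) : is_derive (fun _ => c) x 0.
Proof. exact (is_derive_const c x). Qed.
Lemma D_id x : is_derive (fun t => t) x 1.
Proof. exact (is_derive_id x). Qed.
Lemma D_ln f x df : 0 < f x -> is_derive f x df -> is_derive (fun t => ln (f t)) x (df / f x).
Proof. intros Hp Hd. exact (is_derive_comp ln f x (/ f x) df (is_derive_ln _ Hp) Hd). Qed.
Lemma D_exp f x df : is_derive f x df -> is_derive (fun t => exp (f t)) x (df * exp (f x)).
Proof. intros Hd. exact (is_derive_comp exp f x _ df (is_derive_exp _) Hd). Qed.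
Lemma D_ext (f g : R -> R) (x df df' : R) : is_derive f x df -> df = df' -> (forall t, f t = g t) -> is_derive g x df'.
Proof. intros H <- E. eapply is_derive_ext; [exact E| exact H]. Qed.

Lemma D_cont f x df : is_derive f x df -> continuity_pt f x.
Proof. intros H. apply is_derive_Reals in H.
  apply derivable_continuous_pt. exists df. exact H. Qed.

Lemma ML (F dF : R -> R) a b : a <= b ->
  (forall t, a <= t <= b -> is_derive F t (dF t)) ->
  (forall t, a <= t <= b -> 0 <= dF t) -> F a <= F b.
Proof.
  intros Hab HD Hp. destruct (Req_dec a b) as [->|Hne]; [lra|].
  destruct (MVT_cor2 F dF a b) as [c [Hc1 Hc2]]; [lra| |].
  - intros c Hc. apply is_derive_Reals. now apply HD.
  - pose proof (Hp c ltac:(lra)). nra.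
Qed.

Lemma last_below (f : R -> R) a b c : a <= b ->
  (forall t, a <= t <= b -> continuity_pt f t) -> f a <= c -> c < f b ->
  exists p, a <= p < b /\ f p <= c /\ forall t, p < t <= b -> c < f t.
Proof.
  intros Hab Hc Ha Hb.
  set (E := fun t => a <= t <= b /\ f t <= c).
  assert (HB : bound E) by (exists b; intros t [Ht _]; lra).
  assert (HN : exists x, E x) by (exists a; split; [lra|exact Ha]).
  destruct (completeness E HB HN) as [p [Hub Hlub]].
  assert (Hap : a <= p) by (apply Hub; split; [lra|exact Ha]).
  assert (Hpb : p <= b) by (apply Hlub; intros t [Ht _]; lra).
  assert (Hfp : f p <= c).
  { destruct (Rle_dec (f p) c) as [h|h]; [exact h|exfalso].
    pose proof (Hc p ltac:(lra)) as Hcp.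
    destruct (Hcp (f p - c)) as [al [Hal Hal2]]; [lra|].
    (* every t in (p - al, p] has f t > c; so p - al/2 is an upper bound *)
    assert (Hub2 : is_upper_bound E (Rmax a (p - al/2))).
    { intros t [Ht Hft]. destruct (Rle_dec t (Rmax a (p - al/2))) as [h2|h2]; [exact h2|].
      assert (t <= p) by (apply Hub; split; assumption).
      destruct (Req_dec t p) as [->|Htp]; [lra|].
      pose proof (Hal2 t) as Hq. unfold D_x, no_cond, R_dist in Hq.
      assert (Hd : Rabs (t - p) < al).
      { apply Rabs_def1; unfold Rmax in h2; destruct (Rle_dec a (p - al/2)); lra. }
      pose proof (Hq (conj (conj I (not_eq_sym Htp)) Hd)) as H2. apply Rabs_def2 in H2. lra. }
    pose proof (Hlub _ Hub2). unfold Rmax in *. destruct (Rle_dec a (p - al/2)); try lra.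
    assert (p = a) by lra. subst p. lra. }
  assert (Hpb' : p < b) by (destruct (Req_dec p b); [subst; lra| lra]).
  exists p. split; [lra|]. split; [exact Hfp|].
  intros t Ht. destruct (Rlt_dec c (f t)) as [h|h]; [exact h|exfalso].
  assert (t <= p) by (apply Hub; split; [lra|lra]). lra.
Qed.

Lemma first_above (f : R -> R) a b e : a <= b ->
  (forall t, a <= t <= b -> continuity_pt f t) -> f a < e -> e <= f b ->
  exists q, a < q <= b /\ e <= f q /\ forall t, a <= t < q -> f t < e.
Proof.
  intros Hab Hc Ha Hb.
  set (g := fun t => - f (a + b - t)).
  destruct (last_below g a b (- e)) as [p [Hp1 [Hp2 Hp3]]]; auto.
  - intros t Ht. unfold g. apply continuity_pt_opp.
    apply continuity_pt_comp with (f1 := fun t => a + b - t).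
    + apply continuity_pt_minus; [apply continuity_pt_const; intros ?; auto|apply continuity_pt_id].
    + apply Hc; lra.
  - unfold g. replace (a + b - a) with b by ring. lra.
  - unfold g. replace (a + b - b) with a by ring. lra.
  - exists (a + b - p). split; [lra|]. split.
    + unfold g in Hp2. replace (a + b - (a + b - p)) with p by ring. lra.
    + intros t Ht. pose proof (Hp3 (a + b - t) ltac:(lra)) as H. unfold g in H.
      replace (a + b - (a + b - t)) with t in H by ring. lra.
Qed.

Lemma KL (f df : R -> R) a b c e : a <= b -> c < e ->
  (forall t, a <= t <= b -> is_derive f t (df t)) ->
  f a <= c -> e <= f b ->
  exists x, a < x < b /\ c < f x < e /\ 0 < df x.
Proof.
  intros Hab Hce HD Ha Hb.
  assert (Hc : forall t, a <= t <= b -> continuity_pt f t) by (intros t Ht; apply (D_cont _ _ _ (HD t Ht))).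
  destruct (first_above f a b e) as [q [Hq1 [Hq2 Hq3]]]; auto; try lra.
  destruct (last_below f a q c) as [p [Hp1 [Hp2 Hp3]]]; try lra.
  { intros t Ht; apply Hc; lra. }
  destruct (MVT_cor2 f df p q) as [x [Hx1 Hx2]]; [lra| |].
  { intros t Ht; apply is_derive_Reals, HD; lra. }
  exists x. split; [lra|]. split. split. apply Hp3; lra. apply Hq3; lra.
  assert (H : 0 < f q - f p) by lra. rewrite Hx1 in H.
  destruct (Rle_dec (df x) 0) as [h|h]; [|lra]. nra.
Qed.

Lemma ML' (F dF : R -> R) a b : a <= b ->
  (forall t, a <= t <= b -> is_derive F t (dF t)) ->
  (forall t, a <= t <= b -> dF t <= 0) -> F b <= F a.
Proof.
  intros Hab HD Hp.
  assert (H := ML (fun t => - F t) (fun t => - dF t) a b Hab).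
  assert (- F a <= - F b); [|lra]. apply H.
  - intros t Ht. exact (is_derive_opp F t (dF t) (HD t Ht)).
  - intros t Ht. pose proof (Hp t Ht). lra.
Qed.

Lemma decay (f df : R -> R) t0 k : 0 < k ->
  (forall t, t0 <= t -> is_derive f t (df t)) -> (forall t, t0 <= t -> 0 < f t) ->
  (forall t, t0 <= t -> df t <= - k * f t) ->
  forall eps, 0 < eps -> exists T, t0 <= T /\ forall t, T < t -> f t < eps.
Proof.
  intros Hk HD Hpos Hdf eps He.
  exists (t0 + f t0 / (k * eps) + 1). split.
  { assert (0 < f t0 / (k*eps)) by (apply Rdiv_lt_0_compat; [apply Hpos; lra| nra]). lra. }
  intros t Ht. destruct (Rlt_dec (f t) eps) as [h|h]; [exact h|exfalso].
  assert (Hq : 0 < f t0 / (k*eps)) by (apply Rdiv_lt_0_compat; [apply Hpos; lra| nra]).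
  assert (Hdec : forall s, t0 <= s <= t -> f t <= f s).
  { intros s Hs. apply (ML' f df s t); [lra| intros; apply HD; lra|].
    intros u Hu. pose proof (Hdf u ltac:(lra)). pose proof (Hpos u ltac:(lra)). nra. }
  assert (Hlin : f t + k * eps * t <= f t0 + k * eps * t0).
  { apply (ML' (fun s => f s + k * eps * s) (fun s => df s + k * eps * 1) t0 t); [lra| |].
    - intros s Hs. apply D_plus; [apply HD; lra| apply D_scal, D_id].
    - intros s Hs. pose proof (Hdf s ltac:(lra)). pose proof (Hdec s Hs). nra. }
  assert (k * eps * (t - t0) > f t0).
  { assert (t - t0 > f t0 / (k*eps)) by lra.
    assert (0 < k * eps) by nra.
    apply Rmult_lt_compat_l with (r := k*eps) in H; [|lra].
    replace (k * eps * (f t0 / (k * eps))) with (f t0) in H by (field; lra). lra. }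
  pose proof (Hpos t ltac:(lra)). nra.
Qed.

Lemma Ubound nO a U Q W M :
  (forall w, 0 < w < 1 -> 0 <= nO w <= M) ->
  interior_orbit nO a U Q W ->
  forall t, 1 <= t -> U t <= Rmax (U 1) (3/4).
Proof.
  intros HN Horb t1 Ht1.
  destruct (Rle_dec (U t1) (Rmax (U 1) (3/4))) as [h|h]; [exact h|exfalso].
  destruct (KL U (fun t => fU nO (U t) (Q t) (W t)) 1 t1 (Rmax (U 1) (3/4)) (U t1)) as [x [Hx1 [Hx2 Hx3]]]; try lra.
  - intros t Ht. apply (Horb t ltac:(lra)).
  - apply Rmax_l.
  - destruct (Horb x ltac:(lra)) as [[HU [HQ HW]] _].
    pose proof (HN (W x) HW) as HNx.
    assert (3/4 < U x) by (pose proof (Rmax_r (U 1) (3/4)); lra).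
    unfold fU in Hx3.
    assert (B : (1 - Q x) * (3 - 4 * U x) - nO (W x) * Q x * (1 - U x) < 0).
    { assert ((1 - Q x) * (3 - 4 * U x) < 0) by nra.
      assert (0 <= nO (W x) * Q x * (1 - U x)).
      { apply Rmult_le_pos; [apply Rmult_le_pos|]; lra. }
      lra. }
    assert (0 < U x * (1 - U x)) by nra. nra.
Qed.

Definition tozero (f : R -> R) := forall eps, 0 < eps -> exists T, 0 < T /\ forall t, T < t -> f t < eps.

Lemma N_near3 nO C p dw : 0 <= C -> 0 < p -> 0 < dw ->
  (forall w, 0 < w < 1 -> w / (1 - w) < dw -> Rabs (nO w - 3) <= C * Rpower (w / (1 - w)) p) ->
  exists eW, 0 < eW <= 1/2 /\ forall w, 0 < w < eW -> 2 <= nO w.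
Proof.
  intros HC Hp Hdw H.
  set (ws := exp (ln (/ (C + 1)) / p)).
  assert (Hws : 0 < ws) by apply exp_pos.
  set (m := Rmin dw ws).
  assert (Hm : 0 < m) by (apply Rmin_pos; lra).
  assert (Hm1 : m <= dw) by apply Rmin_l.
  assert (Hm2 : m <= ws) by apply Rmin_r.
  exists (Rmin (1/2) (m/2)). split.
  { split; [apply Rmin_pos; lra| apply Rmin_l]. }
  intros w [Hw1 Hw2].
  assert (w <= 1/2) by (pose proof (Rmin_l (1/2) (m/2)); lra).
  assert (w < m/2) by (pose proof (Rmin_r (1/2) (m/2)); lra).
  assert (Hq : w / (1 - w) <= 2 * w).
  { assert (E : 2*w - w/(1-w) = w*(1-2*w) * / (1-w)) by (field; lra).
    assert (0 <= w*(1-2*w) * / (1-w)).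
    { apply Rmult_le_pos; [nra| left; apply Rinv_0_lt_compat; lra]. }
    lra. }
  assert (Hq0 : 0 < w / (1 - w)) by (apply Rdiv_lt_0_compat; lra).
  assert (Hlt : w / (1 - w) < m) by lra.
  pose proof (H w ltac:(lra) ltac:(lra)) as Hb.
  assert (Hr : Rpower (w / (1 - w)) p < / (C + 1)).
  { unfold Rpower.
    assert (Hl : ln (w / (1 - w)) < ln ws).
    { apply ln_increasing; [exact Hq0|]. lra. }
    unfold ws in Hl. rewrite ln_exp in Hl.
    rewrite <- (exp_ln (/ (C+1))); [|apply Rinv_0_lt_compat; lra].
    apply exp_increasing.
    apply Rmult_lt_compat_l with (r := p) in Hl; [|lra].
    replace (p * (ln (/ (C + 1)) / p)) with (ln (/ (C+1))) in Hl by (field; lra). lra. }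
  assert (C * Rpower (w / (1 - w)) p < 1).
  { assert (C * Rpower (w / (1 - w)) p <= C * / (C + 1)) by (apply Rmult_le_compat_l; lra).
    assert (C * / (C+1) < 1).
    { apply Rmult_lt_reg_r with (r := C + 1); [lra|].
      rewrite Rmult_assoc, Rinv_l; lra. }
    lra. }
  assert (Hb2 : Rabs (nO w - 3) < 1) by lra. apply Rabs_def2 in Hb2. lra.
Qed.

Lemma caseA nO a U Q W M eW t0 : 0 < a ->
  (forall w, 0 < w < 1 -> 0 <= nO w <= M) ->
  0 < eW -> (forall w, 0 < w < eW -> 2 <= nO w) ->
  interior_orbit nO a U Q W ->
  1 <= t0 -> 1/2 < Q t0 ->
  tozero U /\ tozero (fun t => 1 - Q t) /\ tozero W.
Proof.
  intros Ha HN HeW HN2 Horb Ht0 HQ0.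
  set (Ub := Rmax (U 1) (3/4)).
  assert (HUb : forall t, 1 <= t -> U t <= Ub) by (intros; eapply Ubound; eauto).
  assert (HUb1 : Ub < 1).
  { unfold Ub, Rmax. destruct (Rle_dec (U 1) (3/4)); [lra|].
    destruct (Horb 1 ltac:(lra)) as [[HU _] _]. lra. }
  set (cU := 1 - Ub).
  assert (HcU : 0 < cU) by (unfold cU; lra).
  set (Q0 := Q t0) in *.
  assert (HQpos : forall t, 0 < t -> 1/2 < Q t -> 0 < fQ (U t) (Q t) (W t)).
  { intros t Ht Hq. destruct (Horb t Ht) as [[HU [HQ HW]] _]. unfold fQ.
    assert (E : (2 * U t - 1) * (1 - Q t) + Q t * (1 - U t) = (1 - U t) * (2 * Q t - 1) + U t * (1 - Q t)) by ring.
    rewrite E. assert (0 < (1 - U t) * (2 * Q t - 1)) by nra.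
    assert (0 < U t * (1 - Q t)) by nra.
    assert (0 < Q t * (1 - Q t)) by nra. nra. }
  assert (A1 : forall t, t0 <= t -> Q0 <= Q t).
  { intros t1 Ht1. destruct (Rle_dec Q0 (Q t1)) as [h|h]; [exact h|exfalso].
    set (e' := Rmax (Q t1) ((Q0 + 1/2)/2)).
    assert (He1 : Q t1 <= e') by apply Rmax_l.
    assert (He2 : (Q0 + 1/2)/2 <= e') by apply Rmax_r.
    assert (He3 : e' < Q0).
    { unfold e', Rmax. destruct (Rle_dec (Q t1) ((Q0 + 1/2)/2)); lra. }
    destruct (KL (fun t => - Q t) (fun t => - fQ (U t) (Q t) (W t)) t0 t1 (- Q0) (- e'))
      as [x [Hx1 [Hx2 Hx3]]]; try (cbv beta; unfold Q0 in *; lra).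
    - intros t Ht. destruct (Horb t ltac:(lra)) as [_ [_ [dQ _]]].
      exact (is_derive_opp Q t _ dQ).
    - pose proof (HQpos x ltac:(lra) ltac:(lra)). lra. }
  assert (A2 : tozero (fun t => 1 - Q t)).
  { intros eps Heps.
    edestruct (decay (fun t => 1 - Q t) (fun t => - fQ (U t) (Q t) (W t)) t0 (Q0 * cU * (2 * Q0 - 1)))
      as [T [HT1 HT2]].
    - assert (0 < Q0 * cU) by nra. nra.
    - intros t Ht. destruct (Horb t ltac:(lra)) as [_ [_ [dQ _]]].
      eapply D_ext; [exact (D_minus _ _ _ _ _ (D_const t 1) dQ)| ring| reflexivity].
    - intros t Ht. destruct (Horb t ltac:(lra)) as [[_ [HQ _]] _]. lra.
    - intros t Ht. destruct (Horb t ltac:(lra)) as [[HU [HQ HW]] _].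
      pose proof (A1 t Ht). pose proof (HUb t ltac:(lra)). unfold fQ.
      assert (E : (2 * U t - 1) * (1 - Q t) + Q t * (1 - U t) = (1 - U t) * (2 * Q t - 1) + U t * (1 - Q t)) by ring.
      rewrite E.
      assert (G : cU * (2 * Q0 - 1) <= (1 - U t) * (2 * Q t - 1) + U t * (1 - Q t)).
      { assert (cU <= 1 - U t) by (unfold cU; lra).
        assert (cU * (2 * Q0 - 1) <= (1 - U t) * (2 * Q t - 1)) by (apply Rmult_le_compat; lra).
        nra. }
      assert (Q0 * (1 - Q t) <= Q t * (1 - Q t)) by (apply Rmult_le_compat_r; lra).
      assert (0 <= cU * (2*Q0-1)) by nra.
      assert (Q0 * (1 - Q t) * (cU * (2 * Q0 - 1)) <= Q t * (1 - Q t) * ((1 - U t) * (2 * Q t - 1) + U t * (1 - Q t))).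
      { apply Rmult_le_compat; try lra. nra. }
      nra.
    - exact Heps.
    - exists (Rmax T 1). split; [pose proof (Rmax_r T 1); lra|].
      intros t Ht. apply HT2. pose proof (Rmax_l T 1); lra. }
  assert (Wdec : forall t, 1 <= t -> W t <= W 1).
  { intros t Ht. apply (ML' W (fun s => fW a (U s) (Q s) (W s)) 1 t Ht).
    - intros s Hs. apply (Horb s ltac:(lra)).
    - intros s Hs. destruct (Horb s ltac:(lra)) as [[HU [HQ HW]] _]. unfold fW.
      assert (0 <= a * W s * (1 - W s) * Q s * (1 - U s)).
      { repeat apply Rmult_le_pos; lra. }
      lra. }
  assert (HW1 : W 1 < 1) by (destruct (Horb 1 ltac:(lra)) as [[_ [_ HW]] _]; lra).
  assert (A3 : tozero W).
  { intros eps Heps.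
    edestruct (decay W (fun t => fW a (U t) (Q t) (W t)) t0 (a * ((1 - W 1) * (1/2) * cU)))
      as [T [HT1 HT2]].
    - assert (0 < (1 - W 1) * (1/2) * cU) by (repeat apply Rmult_lt_0_compat; lra). nra.
    - intros t Ht. apply (Horb t ltac:(lra)).
    - intros t Ht. destruct (Horb t ltac:(lra)) as [[_ [_ HW]] _]. lra.
    - intros t Ht. destruct (Horb t ltac:(lra)) as [[HU [HQ HW]] _].
      pose proof (A1 t Ht). pose proof (HUb t ltac:(lra)). pose proof (Wdec t ltac:(lra)). unfold fW.
      assert (K1 : (1 - W 1) * (1/2) * cU <= (1 - W t) * Q t * (1 - U t)).
      { assert (0 <= (1 - W 1) * (1/2)) by nra.
        apply Rmult_le_compat; [lra|lra| |unfold cU; lra]. apply Rmult_le_compat; lra. }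
      assert (0 < a * W t) by nra.
      assert (E : - a * W t * (1 - W t) * Q t * (1 - U t) = - (a * W t) * ((1 - W t) * Q t * (1 - U t))) by ring.
      rewrite E.
      assert (E2 : - (a * ((1 - W 1) * (1 / 2) * cU)) * W t = - (a * W t) * ((1 - W 1) * (1 / 2) * cU)) by ring.
      rewrite E2. nra.
    - exact Heps.
    - exists (Rmax T 1). split; [pose proof (Rmax_r T 1); lra|].
      intros t Ht. apply HT2. pose proof (Rmax_l T 1); lra. }
  split; [|split; assumption].
  destruct (A3 eW HeW) as [T1 [HT1 HT1']].
  destruct (A2 (cU / 6)) as [T2 [HT2 HT2']]; [lra|].
  set (T3 := Rmax (Rmax T1 T2) 1 + 1).
  assert (HT3 : 1 < T3 /\ T1 < T3 /\ T2 < T3).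
  { unfold T3. pose proof (Rmax_l (Rmax T1 T2) 1). pose proof (Rmax_r (Rmax T1 T2) 1).
    pose proof (Rmax_l T1 T2). pose proof (Rmax_r T1 T2). lra. }
  intros eps Heps.
  edestruct (decay U (fun t => fU nO (U t) (Q t) (W t)) T3 (cU * cU)) as [T [HT HT']].
  - nra.
  - intros t Ht. apply (Horb t ltac:(lra)).
  - intros t Ht. destruct (Horb t ltac:(lra)) as [[HU _] _]. lra.
  - intros t Ht. destruct (Horb t ltac:(lra)) as [[HU [HQ HW]] _].
    pose proof (HUb t ltac:(lra)) as HUt.
    pose proof (HT1' t ltac:(lra)) as HWt. pose proof (HT2' t ltac:(lra)) as HQt.
    pose proof (HN2 (W t) ltac:(lra)) as HNt.
    assert (HcU1 : cU <= 1 - U t) by (unfold cU; lra).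
    assert (HcU2 : cU <= 1) by (unfold cU; lra).
    unfold fU.
    assert (B : (1 - Q t) * (3 - 4 * U t) - nO (W t) * Q t * (1 - U t) <= - cU).
    { assert ((1 - Q t) * (3 - 4 * U t) <= 3 * (1 - Q t)) by nra.
      assert (2 * Q t * cU <= nO (W t) * Q t * (1 - U t)).
      { apply Rmult_le_compat; try nra. }
      nra. }
    assert (0 < U t * (1 - U t)) by nra.
    assert (U t * (1 - U t) * ((1 - Q t) * (3 - 4 * U t) - nO (W t) * Q t * (1 - U t)) <= U t * (1 - U t) * (- cU)) by (apply Rmult_le_compat_l; lra).
    assert (U t * cU <= U t * (1 - U t)) by (apply Rmult_le_compat_l; lra).
    nra.
  - exact Heps.
  - exists T. split; [lra|]. exact HT'.
Qed.

Lemma ln_le' x y : 0 < x -> x <= y -> ln x <= ln y.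
Proof. intros Hx [H|H]; [left; apply ln_increasing; lra| subst; lra]. Qed.
Lemma exp_le' x y : x <= y -> exp x <= exp y.
Proof. intros [H|H]; [left; apply exp_increasing; lra| subst; lra]. Qed.
Lemma ln_div' x y : 0 < x -> 0 < y -> ln (x / y) = ln x - ln y.
Proof. intros. unfold Rdiv. rewrite ln_mult, ln_Rinv; try lra. apply Rinv_0_lt_compat; lra. Qed.

Definition logit (f : R -> R) (t : R) := ln (f t) - ln (1 - f t).

Lemma D_logit f t df : 0 < f t < 1 -> is_derive f t df ->
  is_derive (logit f) t (df / (f t * (1 - f t))).
Proof.
  intros Hf Hd.
  assert (H1 : is_derive (fun s => 1 - f s) t (0 - df)) by exact (D_minus _ _ _ _ _ (D_const t 1) Hd).
  assert (H2 := D_minus _ _ _ _ _ (D_ln f t df ltac:(lra) Hd) (D_ln (fun s => 1 - f s) t _ ltac:(lra) H1)).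
  eapply D_ext; [exact H2| |reflexivity]. cbv beta. field. split; lra.
Qed.


Lemma caseB nO a U Q W M C p dw : 0 < a -> 0 <= C -> 0 < p -> 0 < dw ->
  (forall w, 0 < w < 1 -> 0 <= nO w <= M) ->
  (forall w, 0 < w < 1 -> w / (1 - w) < dw -> Rabs (nO w - 3) <= C * Rpower (w / (1 - w)) p) ->
  interior_orbit nO a U Q W ->
  (forall t, 1 <= t -> Q t <= 1/2) -> False.
Proof.
  intros Ha HC Hp Hdw HN HN3 Horb HQh.
  set (Ub := Rmax (U 1) (3/4)).
  assert (HUb : forall t, 1 <= t -> U t <= Ub) by (intros; eapply Ubound; eauto).
  assert (HUb1 : Ub < 1).
  { unfold Ub, Rmax. destruct (Rle_dec (U 1) (3/4)); [lra|].
    destruct (Horb 1 ltac:(lra)) as [[HU _] _]. lra. }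
  assert (HUb0 : 0 < Ub) by (unfold Ub; pose proof (Rmax_r (U 1) (3/4)); lra).
  set (cU := 1 - Ub).
  assert (HcU : 0 < cU) by (unfold cU; lra).
  set (K := Rabs M + 1).
  assert (HK : 0 < K) by (unfold K; pose proof (Rabs_pos M); lra).
  set (N := fun t => nO (W t)).
  set (g := fun t => (2 * U t - 1) * (1 - Q t) + Q t * (1 - U t)).
  set (h := fun t => (1 - Q t) * (3 - 4 * U t) - N t * Q t * (1 - U t)).
  assert (dLx : forall t, 0 < t -> is_derive (logit Q) t (g t)).
  { intros t Ht. destruct (Horb t Ht) as [[HU [HQ HW]] [_ [dQ _]]].
    eapply D_ext; [exact (D_logit Q t _ HQ dQ)| |reflexivity].
    unfold fQ, g. field. split; lra. }
  assert (dLy : forall t, 0 < t -> is_derive (logit U) t (h t)).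
  { intros t Ht. destruct (Horb t Ht) as [[HU [HQ HW]] [dU _]].
    eapply D_ext; [exact (D_logit U t _ HU dU)| |reflexivity].
    unfold fU, h, N. field. split; lra. }
  assert (dLw : forall t, 0 < t -> is_derive (logit W) t (- a * Q t * (1 - U t))).
  { intros t Ht. destruct (Horb t Ht) as [[HU [HQ HW]] [_ [_ dW]]].
    eapply D_ext; [exact (D_logit W t _ HW dW)| |reflexivity].
    unfold fW. field. split; lra. }
  assert (Lx0 : forall t, 1 <= t -> logit Q t <= 0).
  { intros t Ht. destruct (Horb t ltac:(lra)) as [[HU [HQ HW]] _]. pose proof (HQh t Ht).
    unfold logit. pose proof (ln_le' (Q t) (1 - Q t) ltac:(lra) ltac:(lra)). lra. }
  set (LyM := ln Ub - ln (1 - Ub)).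
  assert (LyB : forall t, 1 <= t -> logit U t <= LyM).
  { intros t Ht. destruct (Horb t ltac:(lra)) as [[HU [HQ HW]] _]. pose proof (HUb t Ht).
    unfold logit, LyM. pose proof (ln_le' (U t) Ub ltac:(lra) ltac:(lra)).
    pose proof (ln_le' (1 - Ub) (1 - U t) ltac:(lra) ltac:(lra)). lra. }
  set (V := fun t => logit Q t + logit U t - (K / a) * logit W t).
  assert (HV : forall t, 1 <= t -> V 1 + cU * (t - 1) <= V t).
  { intros t Ht.
    assert (H := ML (fun s => V s - cU * s) (fun s => (g s + h s - (K / a) * (- a * Q s * (1 - U s))) - cU * 1) 1 t Ht).
    cbv beta in H. assert (V 1 - cU * 1 <= V t - cU * t); [|lra]. apply H.
    - intros s Hs. apply D_minus; [|apply D_scal, D_id].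
      apply D_minus; [apply D_plus|apply D_scal]; [apply dLx|apply dLy|apply dLw]; lra.
    - intros s Hs. destruct (Horb s ltac:(lra)) as [[HU [HQ HW]] _].
      pose proof (HN (W s) HW) as HNs. pose proof (HQh s ltac:(lra)). pose proof (HUb s ltac:(lra)).
      assert (E : g s + h s - K / a * (- a * Q s * (1 - U s)) = (1 - U s) * 2 * (1 - Q s) + (1 + K - N s) * (Q s * (1 - U s))).
      { unfold g, h. field. lra. }
      rewrite E.
      assert (M <= Rabs M) by apply Rle_abs.
      assert (0 <= (1 + K - N s) * (Q s * (1 - U s))).
      { apply Rmult_le_pos; [unfold K, N; lra| apply Rmult_le_pos; lra]. }
      assert (cU <= 1 - U s) by (unfold cU; lra).
      assert (cU * 1 <= (1 - U s) * 2 * (1 - Q s)).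
      { replace ((1 - U s) * 2 * (1 - Q s)) with ((1 - U s) * (2 * (1 - Q s))) by ring.
        apply Rmult_le_compat; lra. }
      lra. }
  set (V1 := V 1) in *.
  set (r := a * cU / K).
  assert (Hr : 0 < r) by (unfold r; apply Rdiv_lt_0_compat; [nra|lra]).
  set (A0 := (a / K) * (LyM - V1 + cU)).
  assert (HLw : forall t, 1 <= t -> logit W t <= A0 - r * t).
  { intros t Ht. pose proof (HV t Ht). pose proof (Lx0 t Ht). pose proof (LyB t Ht).
    unfold V in H. 
    assert (H2 : (K / a) * logit W t <= LyM - V1 - cU * (t - 1)) by lra.
    apply Rmult_le_compat_l with (r := a / K) in H2; [|left; apply Rdiv_lt_0_compat; lra].
    replace (a / K * (K / a * logit W t)) with (logit W t) in H2 by (field; lra).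
    unfold A0, r. replace (a * cU / K * t) with (a / K * (cU * t)) by (field; lra). nra. }
  set (rho := p * r).
  assert (Hrho : 0 < rho) by (unfold rho; nra).
  set (C2 := C * exp (p * A0)).
  assert (HC2 : 0 <= C2) by (unfold C2; pose proof (exp_pos (p * A0)); nra).
  set (T1 := Rmax 1 ((A0 - ln dw) / r + 1)).
  assert (HT1 : 1 <= T1) by apply Rmax_l.
  assert (HT1' : (A0 - ln dw) / r + 1 <= T1) by apply Rmax_r.
  assert (HE : forall t, T1 <= t -> Rabs (N t - 3) <= C2 * exp (- rho * t)).
  { intros t Ht. destruct (Horb t ltac:(lra)) as [[HU [HQ HW]] _].
    pose proof (HLw t ltac:(lra)) as HL.
    assert (Hq : 0 < W t / (1 - W t)) by (apply Rdiv_lt_0_compat; lra).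
    assert (Hlq : ln (W t / (1 - W t)) = logit W t) by (unfold logit; apply ln_div'; lra).
    assert (Hrt : A0 - r * t < ln dw).
    { assert (r * ((A0 - ln dw) / r + 1) <= r * t) by (apply Rmult_le_compat_l; lra).
      replace (r * ((A0 - ln dw) / r + 1)) with (A0 - ln dw + r) in H by (field; lra). lra. }
    assert (Hw : W t / (1 - W t) < dw).
    { apply ln_lt_inv; [exact Hq|exact Hdw|]. lra. }
    pose proof (HN3 (W t) HW Hw) as Hb. unfold N. eapply Rle_trans; [exact Hb|].
    unfold Rpower. rewrite Hlq. unfold C2. rewrite Rmult_assoc, <- exp_plus.
    apply Rmult_le_compat_l; [exact HC|]. apply exp_le'. unfold rho. nra. }
  set (G := fun t => (5 * logit U t + 12 * logit Q t) - (5 * C2 / rho) * exp (- rho * t)).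
  assert (dE : forall t, is_derive (fun s => exp (- rho * s)) t ((- rho * 1) * exp (- rho * t))).
  { intros t. exact (D_exp (fun s => - rho * s) t _ (D_scal _ t (- rho) _ (D_id t))). }
  assert (HG : forall t, T1 <= t -> G T1 <= G t).
  { intros t Ht.
    apply (ML G (fun s => (5 * h s + 12 * g s) - (5 * C2 / rho) * ((- rho * 1) * exp (- rho * s))) T1 t Ht).
    - intros s Hs. apply D_minus; [|apply D_scal, dE].
      apply D_plus; apply D_scal; [apply dLy|apply dLx]; lra.
    - intros s Hs. destruct (Horb s ltac:(lra)) as [[HU [HQ HW]] _].
      pose proof (HE s ltac:(lra)) as HEs. pose proof (HQh s ltac:(lra)).
      assert (E : 5 * h s + 12 * g s = 3 * (1 - 2 * Q s) + U s * (4 - Q s) + 5 * (3 - N s) * (Q s * (1 - U s))).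
      { unfold g, h. ring. }
      rewrite E.
      assert (E2 : 5 * C2 / rho * (- rho * 1 * exp (- rho * s)) = - (5 * (C2 * exp (- rho * s)))).
      { field. lra. }
      rewrite E2.
      assert (HA := Rabs_pos (N s - 3)). pose proof (Rle_abs (N s - 3)).
      assert (HP : 0 <= Q s * (1 - U s) <= 1) by (split; nra).
      assert ((3 - N s) * (Q s * (1 - U s)) >= - Rabs (N s - 3)).
      { assert (0 <= (3 - N s + Rabs (N s - 3)) * (Q s * (1 - U s))) by (apply Rmult_le_pos; lra).
        assert (Rabs (N s - 3) * (Q s * (1 - U s)) <= Rabs (N s - 3) * 1) by (apply Rmult_le_compat_l; lra).
        nra. }
      assert (0 <= U s * (4 - Q s)) by nra.
      lra. }
  set (m := G T1 / 5).
  assert (HLy : forall t, T1 <= t -> m <= logit U t).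
  { intros t Ht. pose proof (HG t Ht) as HGt. pose proof (Lx0 t ltac:(lra)).
    assert (0 <= 5 * C2 / rho * exp (- rho * t)).
    { apply Rmult_le_pos; [apply Rdiv_le_0_compat; lra| left; apply exp_pos]. }
    unfold m. revert HGt. set (g1 := G T1). unfold G. intros HGt. lra. }
  set (u0 := exp m * cU).
  assert (Hu0 : 0 < u0) by (unfold u0; pose proof (exp_pos m); nra).
  assert (HU0 : forall t, T1 <= t -> u0 <= U t).
  { intros t Ht. destruct (Horb t ltac:(lra)) as [[HU [HQ HW]] _]. pose proof (HUb t ltac:(lra)).
    pose proof (HLy t Ht) as HL. unfold logit in HL.
    assert (H1 : exp (m + ln (1 - U t)) <= exp (ln (U t))) by (apply exp_le'; lra).
    rewrite exp_plus, !exp_ln in H1 by lra.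
    unfold u0. assert (cU <= 1 - U t) by (unfold cU; lra).
    pose proof (exp_pos m). nra. }
  set (F := fun t => (3 * logit Q t + logit U t) - u0 * t - (C2 / rho) * exp (- rho * t)).
  assert (HF : forall t, T1 <= t -> F T1 <= F t).
  { intros t Ht.
    apply (ML F (fun s => (3 * g s + h s) - u0 * 1 - (C2 / rho) * ((- rho * 1) * exp (- rho * s))) T1 t Ht).
    - intros s Hs. apply D_minus; [apply D_minus|apply D_scal, dE].
      + apply D_plus; [apply D_scal, dLx|apply dLy]; lra.
      + apply D_scal, D_id.
    - intros s Hs. destruct (Horb s ltac:(lra)) as [[HU [HQ HW]] _].
      pose proof (HE s ltac:(lra)) as HEs. pose proof (HQh s ltac:(lra)). pose proof (HU0 s ltac:(lra)).
      assert (E : 3 * g s + h s = 2 * U s * (1 - Q s) + (3 - N s) * (Q s * (1 - U s))).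
      { unfold g, h. ring. }
      rewrite E.
      assert (E2 : C2 / rho * (- rho * 1 * exp (- rho * s)) = - (C2 * exp (- rho * s))).
      { field. lra. }
      rewrite E2.
      assert (HA := Rabs_pos (N s - 3)). pose proof (Rle_abs (N s - 3)).
      assert (HP : 0 <= Q s * (1 - U s) <= 1) by (split; nra).
      assert ((3 - N s) * (Q s * (1 - U s)) >= - Rabs (N s - 3)).
      { assert (0 <= (3 - N s + Rabs (N s - 3)) * (Q s * (1 - U s))) by (apply Rmult_le_pos; lra).
        assert (Rabs (N s - 3) * (Q s * (1 - U s)) <= Rabs (N s - 3) * 1) by (apply Rmult_le_compat_l; lra).
        nra. }
      assert (U s <= 2 * U s * (1 - Q s)) by nra.
      lra. }
  set (t := Rmax T1 ((LyM - F T1) / u0) + 1).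
  assert (Ht1 : T1 <= t) by (unfold t; pose proof (Rmax_l T1 ((LyM - F T1) / u0)); lra).
  assert (Ht2 : (LyM - F T1) / u0 + 1 <= t) by (unfold t; pose proof (Rmax_r T1 ((LyM - F T1) / u0)); lra).
  pose proof (HF t Ht1) as HFt. pose proof (Lx0 t ltac:(lra)). pose proof (LyB t ltac:(lra)).
  assert (0 <= C2 / rho * exp (- rho * t)).
  { apply Rmult_le_pos; [apply Rdiv_le_0_compat; lra| left; apply exp_pos]. }
  assert (H3 : u0 * ((LyM - F T1) / u0 + 1) <= u0 * t) by (apply Rmult_le_compat_l; lra).
  replace (u0 * ((LyM - F T1) / u0 + 1)) with (LyM - F T1 + u0) in H3 by (field; lra).
  revert HFt H3. set (f1 := F T1). unfold F. intros. lra.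
Qed.

Lemma core nO a U Q W M C p dw : 0 < a -> 0 <= C -> 0 < p -> 0 < dw ->
  (forall w, 0 < w < 1 -> 0 <= nO w <= M) ->
  (forall w, 0 < w < 1 -> w / (1 - w) < dw -> Rabs (nO w - 3) <= C * Rpower (w / (1 - w)) p) ->
  interior_orbit nO a U Q W ->
  tozero U /\ tozero (fun t => 1 - Q t) /\ tozero W.
Proof.
  intros Ha HC Hp Hdw HN HN3 Horb.
  destruct (N_near3 nO C p dw HC Hp Hdw HN3) as [eW [HeW HN2]].
  destruct (classic (exists t0, 1 <= t0 /\ 1/2 < Q t0)) as [[t0 [H1 H2]]|Hn].
  - apply (caseA nO a U Q W M eW t0); auto; lra.
  - exfalso. apply (caseB nO a U Q W M C p dw); auto.
    intros t Ht. destruct (Rle_dec (Q t) (1/2)) as [h|h]; [exact h|].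
    exfalso. apply Hn. exists t. split; [exact Ht|lra].
Qed.

Lemma poly_facts (n : R -> R) (n1 a0 a1 a : R) :
  asymptotically_polytropic n 3 n1 a0 a1 -> 0 < a ->
  exists M C p dw, 0 <= C /\ 0 < p /\ 0 < dw /\
  (forall w, 0 < w < 1 -> 0 <= nOmega n 3 n1 a w <= M) /\
  (forall w, 0 < w < 1 -> w / (1 - w) < dw ->
     Rabs (nOmega n 3 n1 a w - 3) <= C * Rpower (w / (1 - w)) p).
Proof.
  intros [Ha0 [Ha1 [_ [_ [[M HM] [Hnn [[C [d [Hd HC]]] _]]]]]]] Ha.
  assert (Hval : forall w, 0 < w < 1 -> nOmega n 3 n1 a w = n (Rpower (w / (1 - w)) (1 / a))).
  { intros w Hw. unfold nOmega. destruct (Rle_dec w 0); [lra|]. destruct (Rle_dec 1 w); [lra|]. reflexivity. }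
  exists M, (Rabs C), (1 / a * a0), (Rpower d a).
  split; [apply Rabs_pos|]. split; [apply Rmult_lt_0_compat; [apply Rdiv_lt_0_compat|]; lra|].
  split; [unfold Rpower; apply exp_pos|]. split.
  - intros w Hw. rewrite Hval by exact Hw.
    assert (Hpos : 0 < Rpower (w / (1 - w)) (1 / a)) by (unfold Rpower; apply exp_pos).
    pose proof (HM _ Hpos). pose proof (Hnn _ Hpos). apply Rabs_le_between in H. lra.
  - intros w Hw Hlt. rewrite Hval by exact Hw.
    assert (Hq : 0 < w / (1 - w)) by (apply Rdiv_lt_0_compat; lra).
    assert (Hpos : 0 < Rpower (w / (1 - w)) (1 / a)) by (unfold Rpower; apply exp_pos).
    assert (Hlt2 : Rpower (w / (1 - w)) (1 / a) < d).
    { assert (E : d = Rpower (Rpower d a) (1 / a)).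
      { rewrite Rpower_mult. replace (a * (1 / a)) with 1 by (field; lra). rewrite Rpower_1; lra. }
      rewrite E. unfold Rpower at 1 3. apply exp_increasing.
      apply Rmult_lt_compat_l; [apply Rdiv_lt_0_compat; lra|].
      apply ln_increasing; [exact Hq| exact Hlt]. }
    pose proof (HC _ (conj Hpos Hlt2)) as Hb. rewrite Rpower_mult in Hb.
    eapply Rle_trans; [exact Hb|]. apply Rmult_le_compat_r; [left; unfold Rpower; apply exp_pos| apply Rle_abs].
Qed.

Lemma tozero_lim (f : R -> R) : (forall t, 0 < t -> 0 < f t) -> tozero f -> is_lim f p_infty 0.
Proof.
  intros Hp Hz. apply is_lim_spec. intros eps.
  destruct (Hz eps (cond_pos eps)) as [T [HT HT']]. exists T. intros x Hx.
  pose proof (HT' x Hx). pose proof (Hp x ltac:(lra)).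
  rewrite Rminus_0_r, Rabs_pos_eq; lra.
Qed.

Lemma tozero_lim1 (f : R -> R) : (forall t, 0 < t -> f t < 1) -> tozero (fun t => 1 - f t) -> is_lim f p_infty 1.
Proof.
  intros Hp Hz. apply is_lim_spec. intros eps.
  destruct (Hz eps (cond_pos eps)) as [T [HT HT']]. exists T. intros x Hx.
  pose proof (HT' x Hx). pose proof (Hp x ltac:(lra)).
  rewrite Rabs_minus_sym, Rabs_pos_eq; lra.
Qed.

Lemma seq_lim (f : R -> R) (l : R) (tk : nat -> R) (pl : R) :
  is_lim f p_infty l -> is_lim_seq tk p_infty -> is_lim_seq (fun k => f (tk k)) pl -> pl = l.
Proof.
  intros Hf Ht Hs.
  assert (H2 : is_lim_seq (fun k => f (tk k)) l).
  { apply (is_lim_comp_seq f tk p_infty l Hf); [exists 0%nat; intros; discriminate| exact Ht]. }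
  apply is_lim_seq_unique in Hs. apply is_lim_seq_unique in H2. rewrite Hs in H2.
  injection H2. auto.
Qed.

Theorem mainTheorem11 (n : R -> R) (n1 a0 a1 a : R)
  (Hpoly : asymptotically_polytropic n 3 n1 a0 a1)
  (Ha : 0 < a) (Ha0 : a < a0) (Ha1 : a < a1)
  (U Q W : R -> R)
  (Horb : interior_orbit (nOmega n 3 n1 a) a U Q W) :
  ~ converges_to U Q W (0, 1/2, 0) /\
  (forall p, omega_limit U Q W p <-> p = (0, 1, 0)).
Proof.
  destruct (poly_facts n n1 a0 a1 a Hpoly Ha) as [M [C [p [dw [HC [Hp [Hdw [HN HN3]]]]]]]].
  destruct (core _ a U Q W M C p dw Ha HC Hp Hdw HN HN3 Horb) as [HU [HQ HW]].
  assert (LU : is_lim U p_infty 0).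
  { apply tozero_lim; [intros t Ht; destruct (Horb t Ht) as [[H _] _]; lra| exact HU]. }
  assert (LQ : is_lim Q p_infty 1).
  { apply tozero_lim1; [intros t Ht; destruct (Horb t Ht) as [[_ [H _]] _]; lra| exact HQ]. }
  assert (LW : is_lim W p_infty 0).
  { apply tozero_lim; [intros t Ht; destruct (Horb t Ht) as [[_ [_ H]] _]; lra| exact HW]. }
  split.
  - intros [_ [HQl _]]. simpl in HQl.
    assert (E : Finite (1/2) = Finite 1).
    { rewrite <- (is_lim_unique Q p_infty (1/2) HQl). apply is_lim_unique; exact LQ. }
    injection E. lra.
  - intros [[pu pq] pw]. split.
    + intros [tk [Htk [Hu [Hq Hw]]]]. simpl in Hu, Hq, Hw.
      rewrite (seq_lim U 0 tk pu LU Htk Hu), (seq_lim Q 1 tk pq LQ Htk Hq), (seq_lim W 0 tk pw LW Htk Hw).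
      reflexivity.
    + intros E. injection E as -> -> ->. exists INR. split; [exact is_lim_seq_INR|].
      simpl. repeat split; apply (is_lim_comp_seq _ INR p_infty); try assumption;
        try exact is_lim_seq_INR; exists 0%nat; intros; discriminate.
Qed.
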